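(* Let $N=2^n$ with $n\geq10$, and let $K,\Delta>0$. Let $\tilde h_v=h_v+\Delta$ for $v\in\Lambda_N$. Then, for any realization of the field for which the ground states below are unique, the following two conditions cannot hold simultaneously: (a) $d_{\mathcal C_*^{\Lambda_N}}(\partial\Lambda_{N/4},\partial\Lambda_{N/2})\geq K$; (b) $|\mathcal C_*^{\Lambda_N}\cap\Lambda_{N/4}|\cdot\Delta>\frac{8}{K}|\mathcal C_*^{\Lambda_N}\cap\mathcal A_{N/2}|$.
   Context: Let $\{h_v:v\in\mathbb Z^2\}$ be real numbers (in the paper, i.i.d. centered Gaussians with variance $\epsilon^2$, for which all ground states are unique a.s.). Write $u\sim v$ if $|u-v|_1=1$; $\partial A=\{v\in\mathbb Z^2\setminus A:u\sim v\text{ for some }u\in A\}$; $\Lambda_r=\{v\in\mathbb Z^2:|v|_\infty\le r\}$; $\mathcal A_M=\Lambda_M\setminus\Lambda_{M/2}$, so $\mathcal A_{N/2}=\Lambda_{N/2}\setminus\Lambda_{N/4}$. For a field $g$ on $\Lambda_N$ and $\sigma\in\{-1,1\}^{\Lambda_N}$, $H^{\Lambda_N,\pm}_g(\sigma)=-\big(\sum_{u\sim v,\,u,v\in\Lambda_N}\sigma_u\sigma_v\pm\sum_{u\sim v,\,u\in\Lambda_N,v\in\partial\Lambda_N}\sigma_u+\sum_{u\in\Lambda_N}\sigma_ug_u\big)$, and the ground states $\sigma^{\Lambda_N,\pm}$ (for $g=h$) and $\tilde\sigma^{\Lambda_N,\pm}$ (for $g=\tilde h$) are the minimizers. $\mathcal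 C^{\Lambda_N}=\{v:\sigma^{\Lambda_N,+}_v=1,\sigma^{\Lambda_N,-}_v=-1\}$, $\tilde{\mathcal C}^{\Lambda_N}=\{v:\tilde\sigma^{\Lambda_N,+}_v=1,\tilde\sigma^{\Lambda_N,-}_v=-1\}$, and $\mathcal C_*^{\Lambda_N}=\mathcal C^{\Lambda_N}\cap\tilde{\mathcal C}^{\Lambda_N}$. $d_A$ is the graph distance on the subgraph induced on $A$, and $d_A(A_1,A_2)=\min_{x\in A_1\cap A,y\in A_2\cap A}d_A(x,y)$ with $\min\emptyset=\infty$. *)

(* Defs.v *)
From Stdlib Require Import Bool Reals ZArith List Lia Lra.
Import ListNotations.
Open Scope R_scope.

Definition vtx := (Z * Z)%type.

Definition adj (u v : vtx) : Prop :=
  (Z.abs (fst u - fst v) + Z.abs (snd u - snd v) = 1)%Z.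

Definition inb (r : Z) (v : vtx) : bool :=
  ((Z.abs (fst v) <=? r) && (Z.abs (snd v) <=? r))%Z.
Definition Lam (r : Z) (v : vtx) : Prop := inb r v = true.

Definition bdry (A : vtx -> Prop) (v : vtx) : Prop :=
  ~ A v /\ exists u, A u /\ adj u v.

Definition zrange (a b : Z) : list Z :=
  map (fun k => (a + Z.of_nat k)%Z) (seq 0 (Z.to_nat (b - a + 1))).
Definition box (r : Z) : list vtx := list_prod (zrange (- r) r) (zrange (- r) r).

Definition rsum {A} (l : list A) (f : A -> R) : R :=
  fold_right (fun x acc => f x + acc) 0 l.

Definition vadd (u e : vtx) : vtx := (fst u + fst e, snd u + snd e)%Z.
Definition dirs_pos : list vtx := [(1, 0); (0, 1)]%Z.
Definition dirs4 : list vtx := [(1, 0); (-1, 0); (0, 1); (0, -1)]%Z.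

(* spin configurations: sigma : vtx -> Z, only values on Lambda_N matter *)
Definition spin_config (N : Z) (s : vtx -> Z) : Prop :=
  forall v, Lam N v -> s v = 1%Z \/ s v = (-1)%Z.

(* H^{Lambda_N, b}_g(sigma), b = +1 or -1 the boundary sign.
   Interaction: each unordered nearest-neighbour pair inside Lambda_N once.
   Boundary: each pair (u,v), u in Lambda_N, v in dLambda_N, u ~ v. *)
Definition Ham (N : Z) (b : R) (g : vtx -> R) (s : vtx -> Z) : R :=
  - ( rsum (box N) (fun u => rsum dirs_pos (fun e =>
          if inb N (vadd u e) then IZR (s u * s (vadd u e)) else 0))
    + b * rsum (box N) (fun u => rsum dirs4 (fun e =>
          if inb N (vadd u e) then 0 else IZR (s u)))
    + rsum (box N) (fun u => IZR (s u) * g u) ).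

Definition unique_ground_state (N : Z) (b : R) (g : vtx -> R) (s : vtx -> Z) : Prop :=
  spin_config N s /\
  (forall s', spin_config N s' -> Ham N b g s <= Ham N b g s') /\
  (forall s', spin_config N s' -> Ham N b g s' <= Ham N b g s ->
     forall v, Lam N v -> s' v = s v).

Inductive walk (A : vtx -> Prop) : vtx -> vtx -> nat -> Prop :=
| walk_nil : forall x, A x -> walk A x x 0
| walk_cons : forall x z y k, A x -> adj x z -> walk A z y k -> walk A x y (S k).

(* d_A(A1, A2) >= K, with d_A the graph distance of the subgraph induced on A,
   d_A(A1,A2) = min over x in A1 cap A, y in A2 cap A (min of empty set = oo) *)
Definition dist_ge (A A1 A2 : vtx -> Prop) (K : R) : Prop :=
  forall x y k, A1 x -> A2 y -> walk A x y k -> K <= INR k.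

Definition Cstarb (sp sm tp tm : vtx -> Z) (v : vtx) : bool :=
  (Z.eqb (sp v) 1 && Z.eqb (sm v) (-1) && Z.eqb (tp v) 1 && Z.eqb (tm v) (-1))%Z.
Definition Cstar (N : Z) (sp sm tp tm : vtx -> Z) (v : vtx) : Prop :=
  Lam N v /\ Cstarb sp sm tp tm v = true.

Definition card_in (N : Z) (P : vtx -> bool) : nat :=
  length (filter P (box N)).

(* Main.v *)
Require Import Defs.
From Stdlib Require Import Bool Reals ZArith List Lia Lra ClassicalEpsilon FinFun.
Import ListNotations.
Open Scope R_scope.


Lemma rsum_app {A} (l1 l2 : list A) f : rsum (l1 ++ l2) f = rsum l1 f + rsum l2 f.
Proof. induction l1; simpl; [lra|]. unfold rsum in *; simpl; rewrite IHl1; lra. Qed.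

Lemma rsum_plus {A} (l : list A) f g : rsum l (fun x => f x + g x) = rsum l f + rsum l g.
Proof. induction l; unfold rsum in *; simpl; [lra|]. rewrite IHl; lra. Qed.

Lemma rsum_scal {A} (l : list A) c f : rsum l (fun x => c * f x) = c * rsum l f.
Proof. induction l; unfold rsum in *; simpl; [lra|]. rewrite IHl; lra. Qed.

Lemma rsum_opp {A} (l : list A) f : rsum l (fun x => - f x) = - rsum l f.
Proof. induction l; unfold rsum in *; simpl; [lra|]. rewrite IHl; lra. Qed.

Lemma rsum_le {A} (l : list A) f g : (forall x, In x l -> f x <= g x) -> rsum l f <= rsum l g.
Proof. induction l; intros H; unfold rsum in *; simpl; [lra|].
  assert (f a <= g a) by (apply H; simpl; auto).
  assert (fold_right (fun x acc => f x + acc) 0 l <= fold_right (fun x acc => g x + acc) 0 l)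
    by (apply IHl; intros; apply H; simpl; auto). lra. Qed.

Lemma rsum_ext {A} (l : list A) f g : (forall x, In x l -> f x = g x) -> rsum l f = rsum l g.
Proof. intros H; apply Rle_antisym; apply rsum_le; intros x Hx; rewrite H; auto; lra. Qed.

Lemma rsum_nonneg {A} (l : list A) f : (forall x, 0 <= f x) -> 0 <= rsum l f.
Proof. intros H; induction l; unfold rsum in *; simpl; [lra|]. specialize (H a); lra. Qed.

Lemma rsum_sub {A} (l1 l2 : list A) f :
  NoDup l1 -> incl l1 l2 -> (forall x, 0 <= f x) -> rsum l1 f <= rsum l2 f.
Proof.
  revert l1; induction l2 as [|a l2 IH]; intros l1 H1 H2 Hf.
  - destruct l1 as [|b l1]; [unfold rsum; simpl; lra|]. exfalso; apply (H2 b); simpl; auto.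
  - destruct (in_dec (fun x y => excluded_middle_informative (x = y)) a l1) as [Ha|Ha].
    + apply in_split in Ha as [p [q ->]].
      rewrite rsum_app. unfold rsum at 2; simpl. fold (rsum q f).
      unfold rsum at 3; simpl. fold (rsum l2 f).
      assert (Hpq: rsum (p ++ q) f <= rsum l2 f).
      { apply IH.
        - eapply NoDup_remove_1; eauto.
        - intros x Hx. assert (In x (p ++ a :: q)) by (apply in_app_or in Hx; apply in_or_app; simpl; tauto).
          specialize (H2 x H). destruct H2 as [->|]; auto.
          exfalso; eapply NoDup_remove_2; eauto.
        - auto. }
      rewrite rsum_app in Hpq. lra.
    + unfold rsum at 2; simpl. fold (rsum l2 f).
      assert (rsum l1 f <= rsum l2 f).
      { apply IH; auto. intros x Hx. specialize (H2 x Hx). destruct H2 as [->|]; tauto. }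
      specialize (Hf a); lra.
Qed.

Lemma card_rsum {A} (l : list A) (P : A -> bool) :
  INR (length (filter P l)) = rsum l (fun v => if P v then 1 else 0).
Proof. induction l; unfold rsum in *; simpl; [reflexivity|].
  destruct (P a); simpl length; rewrite <- IHl; [rewrite S_INR|]; lra. Qed.

Lemma in_zrange a b z : In z (zrange a b) <-> (a <= z <= b)%Z.
Proof. unfold zrange. rewrite in_map_iff. split.
  - intros [k [<- Hk]]. apply in_seq in Hk. lia.
  - intros H. exists (Z.to_nat (z - a)). split; [lia|]. apply in_seq. lia. Qed.

Lemma nodup_zrange a b : NoDup (zrange a b).
Proof. unfold zrange. apply Injective_map_NoDup; [intros x y H; lia|apply seq_NoDup]. Qed.

Lemma in_box N v : In v (box N) <-> Lam N v.
Proof. destruct v as [x y]. unfold box, Lam, inb. rewrite (in_prod_iff (zrange (-N) N) (zrange (-N) N) x y), !in_zrange. simpl.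
  rewrite andb_true_iff, !Z.leb_le. lia. Qed.

Lemma nodup_prod {A B} (l1 : list A) (l2 : list B) : NoDup l1 -> NoDup l2 -> NoDup (list_prod l1 l2).
Proof. intros H1 H2; induction H1 as [|a l1 Ha H1 IH]; simpl; [constructor|].
  apply NoDup_app; auto.
  - apply Injective_map_NoDup; auto. intros x y H; inversion H; auto.
  - intros [x y] Hx Hy. apply in_map_iff in Hx as [z [Hz _]]. inversion Hz; subst.
    apply in_prod_iff in Hy. tauto. Qed.

Lemma nodup_box N : NoDup (box N).
Proof. apply nodup_prod; apply nodup_zrange. Qed.

Lemma rsum_shift_filter {A} (l : list A) (g : A -> A) (P : A -> bool) f :
  rsum l (fun u => if P (g u) then f (g u) else 0) = rsum (filter P (map g l)) f.
Proof. induction l; unfold rsum in *; simpl; auto. destruct (P (g a)); simpl; rewrite IHl; lra. Qed.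

Lemma rsum_shift N e f : (forall x, 0 <= f x) ->
  rsum (box N) (fun u => if inb N (vadd u e) then f (vadd u e) else 0) <= rsum (box N) f.
Proof. intros Hf. rewrite (rsum_shift_filter _ (fun u => vadd u e)).
  apply rsum_sub; auto.
  - apply NoDup_filter. apply Injective_map_NoDup; [|apply nodup_box].
    intros [a b] [c d]; unfold vadd; simpl; intros H; inversion H; f_equal; lia.
  - intros x Hx. apply filter_In in Hx. apply in_box. apply Hx.
Qed.


Lemma adj_sym u v : adj u v -> adj v u.
Proof. unfold adj; lia. Qed.

Lemma lam_mono R R' v : (R <= R')%Z -> Lam R v -> Lam R' v.
Proof. unfold Lam, inb. rewrite !andb_true_iff, !Z.leb_le. lia. Qed.

Lemma adj_lam R u x : adj u x -> Lam R u -> Lam (R + 1) x.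
Proof. unfold adj, Lam, inb. rewrite !andb_true_iff, !Z.leb_le. lia. Qed.

Lemma bdry_lam R x : bdry (Lam R) x -> Lam (R+1) x.
Proof. intros [_ [u [Hu Ha]]]. eapply adj_lam; eauto. Qed.

Lemma walk_start A x y k : walk A x y k -> A x.
Proof. intros H; inversion H; auto. Qed.

Lemma walk_end A x y k : walk A x y k -> A y.
Proof. induction 1; auto. Qed.

Lemma walk_snoc A x y k z : walk A x y k -> adj y z -> A z -> walk A x z (S k).
Proof. induction 1; intros Ha Hz.
  - apply walk_cons with z; auto. constructor; auto.
  - apply walk_cons with z0; auto. Qed.

Lemma walk_ivt A R x y k : walk A x y k -> Lam R x -> ~ Lam R y ->
  exists y' k', (k' <= k)%nat /\ walk A x y' k' /\ bdry (Lam R) y'.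
Proof.
  induction 1 as [x Hx|x z y k Hx Hxz Hw IH]; intros H1 H2.
  - tauto.
  - destruct (excluded_middle_informative (Lam R z)) as [Hz|Hz].
    + destruct (IH Hz H2) as [y' [k' [Hk [Hw' Hb]]]].
      exists y', (S k'). split; [lia|]. split; auto. apply walk_cons with z; auto.
    + exists z, 1%nat. split; [lia|]. split.
      * apply walk_cons with z; auto. constructor. eapply walk_start; eauto.
      * split; auto. exists x; auto.
Qed.

Definition pI N (s : vtx -> Z) u e := if inb N (vadd u e) then IZR (s u * s (vadd u e)) else 0.
Definition pB N (s : vtx -> Z) u e := if inb N (vadd u e) then 0 else IZR (s u).
Definition loc N b g (s : vtx -> Z) u :=
  - (rsum dirs_pos (pI N s u) + b * rsum dirs4 (pB N s u) + IZR (s u) * g u).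

Lemma Ham_loc N b g s : Ham N b g s = rsum (box N) (loc N b g s).
Proof. unfold Ham, loc. rewrite rsum_opp, !rsum_plus, rsum_scal. reflexivity. Qed.

Lemma spin_val N s v : spin_config N s -> Lam N v -> (s v = 1 \/ s v = -1)%Z.
Proof. intros H Hv; apply H; auto. Qed.


Lemma pm1 (z : Z) : (z = 1 \/ z = -1)%Z -> (z = 1 \/ z = -1)%Z.
Proof. auto. Qed.

Ltac zs := repeat match goal with
  | |- context [Z.min ?x ?y] => let v := eval compute in (Z.min x y) in change (Z.min x y) with v
  | |- context [Z.max ?x ?y] => let v := eval compute in (Z.max x y) in change (Z.max x y) with v
  | |- context [Z.mul ?x ?y] => let v := eval compute in (Z.mul x y) in change (Z.mul x y) with v
  end.

Ltac dpm H := destruct H as [H|H]; rewrite H in *.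

Lemma edge_mm (au av cu cv : Z) :
  (au = 1 \/ au = -1)%Z -> (av = 1 \/ av = -1)%Z -> (cu = 1 \/ cu = -1)%Z -> (cv = 1 \/ cv = -1)%Z ->
  IZR (au * av) + IZR (cu * cv) <= IZR (Z.min au cu * Z.min av cv) + IZR (Z.max au cu * Z.max av cv).
Proof. intros H1 H2 H3 H4; dpm H1; dpm H2; dpm H3; dpm H4; zs; lra. Qed.

Lemma mono N b g g' a c : unique_ground_state N b g a -> unique_ground_state N b g' c ->
  (forall v, g v <= g' v) -> forall v, Lam N v -> (a v <= c v)%Z.
Proof.
  intros [Sa [Ma Ua]] [Sc [Mc Uc]] Hg.
  set (mn := fun v => Z.min (a v) (c v)). set (mx := fun v => Z.max (a v) (c v)).
  assert (Smn : spin_config N mn).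
  { intros v Hv; unfold mn; destruct (Sa v Hv) as [-> | ->]; destruct (Sc v Hv) as [-> | ->]; zs; auto. }
  assert (Smx : spin_config N mx).
  { intros v Hv; unfold mx; destruct (Sa v Hv) as [-> | ->]; destruct (Sc v Hv) as [-> | ->]; zs; auto. }
  assert (Hsum : Ham N b g mn + Ham N b g' mx <= Ham N b g a + Ham N b g' c).
  { rewrite !Ham_loc, <- !rsum_plus. apply rsum_le. intros u Hu. apply in_box in Hu.
    assert (HI : forall e, pI N a u e + pI N c u e <= pI N mn u e + pI N mx u e).
    { intros e. unfold pI. destruct (inb N (vadd u e)) eqn:E; [|lra].
      apply edge_mm; auto. }
    assert (HB : forall e, pB N mn u e + pB N mx u e = pB N a u e + pB N c u e).
    { intros e. unfold pB. destruct (inb N (vadd u e)); [lra|].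
      unfold mn, mx. destruct (Sa u Hu) as [-> | ->]; destruct (Sc u Hu) as [-> | ->]; zs; lra. }
    assert (HF : IZR (a u) * g u + IZR (c u) * g' u <= IZR (mn u) * g u + IZR (mx u) * g' u).
    { specialize (Hg u). unfold mn, mx. destruct (Sa u Hu) as [-> | ->]; destruct (Sc u Hu) as [-> | ->]; zs; lra. }
    unfold loc; cbn [rsum fold_right dirs_pos dirs4].
    unfold rsum, dirs_pos, dirs4; cbn [fold_right].
    pose proof (HI (1,0)%Z); pose proof (HI (0,1)%Z).
    pose proof (HB (1,0)%Z); pose proof (HB (-1,0)%Z); pose proof (HB (0,1)%Z); pose proof (HB (0,-1)%Z).
    assert (Eb : forall x y z w : R, b * x + b * y - b * z - b * w = b * (x + y - z - w)) by (intros; ring).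
    set (X1 := pB N mn u (1,0)%Z) in *. set (X2 := pB N mn u (-1,0)%Z) in *.
    set (X3 := pB N mn u (0,1)%Z) in *. set (X4 := pB N mn u (0,-1)%Z) in *.
    replace X1 with (pB N a u (1, 0)%Z + pB N c u (1, 0)%Z - pB N mx u (1, 0)%Z) by lra.
    replace X2 with (pB N a u (-1, 0)%Z + pB N c u (-1, 0)%Z - pB N mx u (-1, 0)%Z) by lra.
    replace X3 with (pB N a u (0, 1)%Z + pB N c u (0, 1)%Z - pB N mx u (0, 1)%Z) by lra.
    replace X4 with (pB N a u (0, -1)%Z + pB N c u (0, -1)%Z - pB N mx u (0, -1)%Z) by lra.
    ring_simplify. lra. }
  assert (H1 := Ma mn Smn). assert (H2 := Mc mx Smx).
  assert (H3 : Ham N b g mn <= Ham N b g a) by lra.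
  intros v Hv. specialize (Ua mn Smn H3 v Hv). unfold mn in Ua. lia.
Qed.


Definition reach N (Cs : vtx -> Prop) j v :=
  exists x k, bdry (Lam (N/4)) x /\ walk Cs x v k /\ (k < j)%nat.
Definition Wj N Cs j v := Cs v /\ (Lam (N/4) v \/ reach N Cs j v).
Definition Lj N Cs j v := Cs v /\ ~ Lam (N/4) v /\
  (exists x, bdry (Lam (N/4)) x /\ walk Cs x v j) /\ ~ reach N Cs j v.

Definition db (P : Prop) : bool := if excluded_middle_informative P then true else false.
Definition indP (P : Prop) : R := if excluded_middle_informative P then 1 else 0.

Lemma db_true P : db P = true <-> P.
Proof. unfold db; destruct excluded_middle_informative; split; auto; discriminate. Qed.
Lemma db_false P : db P = false <-> ~ P.
Proof. unfold db; destruct excluded_middle_informative; split; auto; try discriminate; tauto. Qed.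
Lemma indP_1 (P : Prop) : P -> indP P = 1.
Proof. unfold indP; destruct excluded_middle_informative; tauto. Qed.
Lemma indP_0 (P : Prop) : ~ P -> indP P = 0.
Proof. unfold indP; destruct excluded_middle_informative; tauto. Qed.
Lemma indP_01 (P : Prop) : indP P = 0 \/ indP P = 1.
Proof. unfold indP; destruct excluded_middle_informative; auto. Qed.

Lemma lam_dec R v : Lam R v \/ ~ Lam R v.
Proof. unfold Lam; destruct (inb R v); auto. Qed.

Lemma walk_inside N K (Cs : vtx -> Prop) x v k :
  (N/4 + 1 <= N/2)%Z -> dist_ge Cs (bdry (Lam (N/4))) (bdry (Lam (N/2))) K ->
  bdry (Lam (N/4)) x -> walk Cs x v k -> INR k < K -> Lam (N/2) v.
Proof.
  intros HN Hd Hx Hw Hk. destruct (lam_dec (N/2) v) as [|Hv]; auto. exfalso.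
  assert (Hx2 : Lam (N/2) x) by (eapply lam_mono; [|apply bdry_lam; eauto]; lia).
  destruct (walk_ivt _ _ _ _ _ Hw Hx2 Hv) as [y [k' [Hk' [Hw' Hb]]]].
  specialize (Hd x y k' Hx Hb Hw'). apply le_INR in Hk'. lra.
Qed.

Lemma W_inside N K Cs j v : (N/4 + 1 <= N/2)%Z -> (0 <= N/4)%Z ->
  dist_ge Cs (bdry (Lam (N/4))) (bdry (Lam (N/2))) K -> INR j < K ->
  Wj N Cs j v -> Lam (N/2) v.
Proof.
  intros HN H0 Hd Hj [Hc [Hv | [x [k [Hx [Hw Hk]]]]]].
  - eapply lam_mono; [|eauto]; lia.
  - eapply walk_inside; eauto. apply lt_INR in Hk. lra.
Qed.

Lemma L_inside N K Cs j v : (N/4 + 1 <= N/2)%Z ->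
  dist_ge Cs (bdry (Lam (N/4))) (bdry (Lam (N/2))) K -> INR j < K ->
  Lj N Cs j v -> Lam (N/2) v /\ ~ Lam (N/4) v /\ Cs v.
Proof.
  intros HN Hd Hj [Hc [Hn [[x [Hx Hw]] _]]]. split; auto. eapply walk_inside; eauto.
Qed.

Lemma W_L N Cs j u v : Wj N Cs j u -> adj u v -> Cs v -> ~ Wj N Cs j v -> Lj N Cs j v.
Proof.
  intros [Hcu Hu] Ha Hcv Hnv.
  assert (Hn4 : ~ Lam (N/4) v) by (intros H; apply Hnv; split; auto).
  assert (Hnr : ~ reach N Cs j v) by (intros H; apply Hnv; split; auto).
  split; auto. split; auto. split; auto.
  destruct Hu as [Hu | [x [k [Hx [Hw Hk]]]]].
  - assert (Hb : bdry (Lam (N/4)) v) by (split; auto; exists u; auto).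
    destruct j as [|j].
    + exists v; split; auto. constructor; auto.
    + exfalso; apply Hnr. exists v, 0%nat. split; auto. split; [constructor; auto|lia].
  - assert (Hw' : walk Cs x v (S k)) by (eapply walk_snoc; eauto).
    destruct (Nat.eq_dec (S k) j) as [<-|Hne].
    + exists x; auto.
    + exfalso; apply Hnr. exists x, (S k). split; auto. split; auto. lia.
Qed.

Lemma L_disj N Cs i j v : Lj N Cs i v -> Lj N Cs j v -> i = j.
Proof.
  intros [_ [_ [[x [Hx Hw]] Hi]]] [_ [_ [[y [Hy Hw']] Hj]]].
  destruct (Nat.lt_total i j) as [H|[H|H]]; auto; exfalso.
  - apply Hj; exists x, i; auto.
  - apply Hi; exists y, j; auto.
Qed.
Lemma db_t P : db P = true -> P.
Proof. apply db_true. Qed.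
Lemma db_f P : db P = false -> ~ P.
Proof. apply db_false. Qed.


Ltac zs2 := repeat match goal with
  | |- context [Z.mul ?x ?y] => let v := eval compute in (Z.mul x y) in change (Z.mul x y) with v
  end.

Lemma edge_key (au av cu cv : Z) (wu wv : bool) (lu lv : R) :
  (au = 1 \/ au = -1)%Z -> (av = 1 \/ av = -1)%Z -> (cu = 1 \/ cu = -1)%Z -> (cv = 1 \/ cv = -1)%Z ->
  (wu = true -> au = -1 /\ cu = 1)%Z -> (wv = true -> av = -1 /\ cv = 1)%Z ->
  (wu = true -> wv = false -> cv = 1%Z -> av = (-1)%Z -> lv = 1) ->
  (wu = false -> wv = true -> cu = 1%Z -> au = (-1)%Z -> lu = 1) -> 0 <= lu -> 0 <= lv ->
  - (IZR ((if wu then 1 else au) * (if wv then 1 else av)) - IZR (au * av))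
  - (IZR ((if wu then -1 else cu) * (if wv then -1 else cv)) - IZR (cu * cv)) <= 4 * (lv + lu).
Proof.
  intros H1 H2 H3 H4 H5 H6 H7 H8 H9 H10.
  destruct H1 as [->| ->]; destruct H2 as [->| ->]; destruct H3 as [->| ->]; destruct H4 as [->| ->];
  destruct wu; destruct wv;
  repeat match goal with H : ?x = ?x -> _ |- _ => specialize (H eq_refl) end;
  try (destruct H5; discriminate); try (destruct H6; discriminate);
  zs2; lra.
Qed.


Lemma Cstar_iff N sp sm tp tm v : Cstar N sp sm tp tm v <->
  Lam N v /\ sp v = 1%Z /\ sm v = (-1)%Z /\ tp v = 1%Z /\ tm v = (-1)%Z.
Proof. unfold Cstar, Cstarb. rewrite !andb_true_iff, !Z.eqb_eq. tauto. Qed.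

Definition tau1 N Cs j (tm : vtx -> Z) v := if db (Wj N Cs j v) then 1%Z else tm v.
Definition tau2 N Cs j (sp : vtx -> Z) v := if db (Wj N Cs j v) then (-1)%Z else sp v.
Definition sh N Cs j e u := if inb N (vadd u e) then indP (Lj N Cs j (vadd u e)) else 0.

Lemma per_u N K Delta h sp sm tp tm j u :
  (N/4 + 1 <= N/2)%Z -> (N/2 + 1 <= N)%Z -> (0 <= N/4)%Z ->
  unique_ground_state N 1 h sp -> unique_ground_state N (-1) h sm ->
  unique_ground_state N 1 (fun v => h v + Delta) tp ->
  unique_ground_state N (-1) (fun v => h v + Delta) tm -> 0 < Delta ->
  dist_ge (Cstar N sp sm tp tm) (bdry (Lam (N/4))) (bdry (Lam (N/2))) K -> INR j < K ->
  Lam N u ->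
  let Cs := Cstar N sp sm tp tm in
  loc N (-1) (fun v => h v + Delta) (tau1 N Cs j tm) u - loc N (-1) (fun v => h v + Delta) tm u
  + (loc N 1 h (tau2 N Cs j sp) u - loc N 1 h sp u)
  <= -2 * Delta * indP (Wj N Cs j u) + 4 * (sh N Cs j (1,0)%Z u + sh N Cs j (0,1)%Z u)
     + 8 * indP (Lj N Cs j u).
Proof.
  intros HN1 HN2 HN0 Gsp Gsm Gtp Gtm HD Hd Hj Hu Cs.
  set (ht := fun v => h v + Delta).
  assert (Msm : forall v, Lam N v -> (sm v <= tm v)%Z).
  { apply (mono N (-1) h ht); auto. intros; unfold ht; lra. }
  assert (Msp : forall v, Lam N v -> (sp v <= tp v)%Z).
  { apply (mono N 1 h ht); auto. intros; unfold ht; lra. }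
  destruct Gsp as [Ssp _]; destruct Gsm as [Ssm _]; destruct Gtp as [Stp _]; destruct Gtm as [Stm _].
  assert (WC : forall v, Wj N Cs j v -> Cs v) by (intros v [H _]; exact H).
  assert (Win : forall v e, Wj N Cs j v -> adj v (vadd v e) -> inb N (vadd v e) = true).
  { intros v e Hw Ha. assert (H := W_inside _ _ _ _ _ HN1 HN0 Hd Hj Hw).
    apply adj_lam with (x := vadd v e) in H; auto. change (Lam N (vadd v e)). eapply lam_mono; [|eauto]; lia. }
  assert (Hedge : forall e, adj u (vadd u e) ->
    - (pI N (tau1 N Cs j tm) u e - pI N tm u e) - (pI N (tau2 N Cs j sp) u e - pI N sp u e)
    <= 4 * (sh N Cs j e u + indP (Lj N Cs j u))).
  { intros e Ha. unfold pI, sh. set (v := vadd u e) in *. destruct (inb N v) eqn:E.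
    2:{ destruct (indP_01 (Lj N Cs j u)) as [-> | ->]; lra. }
    assert (Hv : Lam N v) by exact E.
    unfold tau1, tau2.
    apply edge_key; auto.
    - intros Hw; apply db_t in Hw; apply WC in Hw; apply Cstar_iff in Hw; tauto.
    - intros Hw; apply db_t in Hw; apply WC in Hw; apply Cstar_iff in Hw; tauto.
    - intros Hwu Hwv Hc Ha'. apply indP_1. apply db_t in Hwu; apply db_f in Hwv.
      eapply W_L; eauto. apply Cstar_iff. specialize (Msm v Hv); specialize (Msp v Hv).
      destruct (Ssm v Hv); destruct (Stp v Hv); repeat split; auto; lia.
    - intros Hwu Hwv Hc Ha'. apply indP_1. apply db_f in Hwu; apply db_t in Hwv.
      eapply W_L; eauto. apply adj_sym; auto. apply Cstar_iff. specialize (Msm u Hu); specialize (Msp u Hu).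
      destruct (Ssm u Hu); destruct (Stp u Hu); repeat split; auto; lia.
    - unfold indP; destruct excluded_middle_informative; lra.
    - unfold indP; destruct excluded_middle_informative; lra. }
  assert (Hbd : forall e, adj u (vadd u e) ->
    pB N (tau1 N Cs j tm) u e = pB N tm u e /\ pB N (tau2 N Cs j sp) u e = pB N sp u e).
  { intros e Ha. unfold pB, tau1, tau2. destruct (inb N (vadd u e)) eqn:E; auto.
    destruct (db (Wj N Cs j u)) eqn:Ew; auto.
    apply db_t in Ew. rewrite (Win u e Ew Ha) in E. discriminate. }
  assert (Hf : - (IZR (tau1 N Cs j tm u) * ht u) + IZR (tm u) * ht u
               - IZR (tau2 N Cs j sp u) * h u + IZR (sp u) * h u = -2 * Delta * indP (Wj N Cs j u)).
  { unfold tau1, tau2. destruct (db (Wj N Cs j u)) eqn:Ew.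
    - apply db_t in Ew. rewrite indP_1 by auto. apply WC, Cstar_iff in Ew.
      destruct Ew as [_ [-> [_ [_ ->]]]]. unfold ht; lra.
    - apply db_f in Ew. rewrite indP_0 by auto. lra. }
  assert (A1 : adj u (vadd u (1,0)%Z)) by (unfold adj, vadd; simpl; lia).
  assert (A2 : adj u (vadd u (0,1)%Z)) by (unfold adj, vadd; simpl; lia).
  assert (A3 : adj u (vadd u (-1,0)%Z)) by (unfold adj, vadd; simpl; lia).
  assert (A4 : adj u (vadd u (0,-1)%Z)) by (unfold adj, vadd; simpl; lia).
  pose proof (Hedge _ A1); pose proof (Hedge _ A2).
  destruct (Hbd _ A1) as [B1 B1']; destruct (Hbd _ A2) as [B2 B2'];
  destruct (Hbd _ A3) as [B3 B3']; destruct (Hbd _ A4) as [B4 B4'].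
  unfold loc, rsum, dirs_pos, dirs4; cbn [fold_right].
  rewrite B1, B1', B2, B2', B3, B3', B4, B4'.
  fold ht. lra.
Qed.


Lemma rsum_minus {T} (l : list T) f g : rsum l (fun x => f x - g x) = rsum l f - rsum l g.
Proof. induction l; unfold rsum in *; simpl; [lra|]. rewrite IHl; lra. Qed.

Lemma layer_bound N K Delta h sp sm tp tm j :
  (N/4 + 1 <= N/2)%Z -> (N/2 + 1 <= N)%Z -> (0 <= N/4)%Z ->
  unique_ground_state N 1 h sp -> unique_ground_state N (-1) h sm ->
  unique_ground_state N 1 (fun v => h v + Delta) tp ->
  unique_ground_state N (-1) (fun v => h v + Delta) tm -> 0 < Delta ->
  dist_ge (Cstar N sp sm tp tm) (bdry (Lam (N/4))) (bdry (Lam (N/2))) K -> INR j < K ->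
  Delta * rsum (box N) (fun v => if Cstarb sp sm tp tm v && inb (N/4) v then 1 else 0)
  <= 8 * rsum (box N) (fun u => indP (Lj N (Cstar N sp sm tp tm) j u)).
Proof.
  intros HN1 HN2 HN0 Gsp Gsm Gtp Gtm HD Hd Hj.
  set (Cs := Cstar N sp sm tp tm).
  set (ht := fun v => h v + Delta).
  assert (S1 : spin_config N (tau1 N Cs j tm)).
  { intros v Hv; unfold tau1; destruct db; auto. apply Gtm; auto. }
  assert (S2 : spin_config N (tau2 N Cs j sp)).
  { intros v Hv; unfold tau2; destruct db; auto. apply Gsp; auto. }
  pose proof (proj1 (proj2 Gtm) _ S1) as M1.
  pose proof (proj1 (proj2 Gsp) _ S2) as M2.
  assert (H0 : 0 <= rsum (box N) (fun u =>
     loc N (-1) ht (tau1 N Cs j tm) u - loc N (-1) ht tm u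
     + (loc N 1 h (tau2 N Cs j sp) u - loc N 1 h sp u))).
  { rewrite rsum_plus, !rsum_minus, <- !Ham_loc. fold ht in M1. lra. }
  assert (H1 : rsum (box N) (fun u =>
     loc N (-1) ht (tau1 N Cs j tm) u - loc N (-1) ht tm u
     + (loc N 1 h (tau2 N Cs j sp) u - loc N 1 h sp u))
     <= rsum (box N) (fun u => -2 * Delta * indP (Wj N Cs j u)
          + 4 * (sh N Cs j (1,0)%Z u + sh N Cs j (0,1)%Z u) + 8 * indP (Lj N Cs j u))).
  { apply rsum_le. intros u Hu. apply in_box in Hu.
    eapply per_u; eauto. }
  assert (H2 : 0 <= rsum (box N) (fun u => -2 * Delta * indP (Wj N Cs j u)
          + 4 * (sh N Cs j (1,0)%Z u + sh N Cs j (0,1)%Z u) + 8 * indP (Lj N Cs j u))) by lra.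
  clear H0 H1. rename H2 into H1.
  rewrite !rsum_plus, !rsum_scal, rsum_plus in H1.
  assert (Hnn : forall x, 0 <= indP (Lj N Cs j x)).
  { intros x; unfold indP; destruct excluded_middle_informative; lra. }
  pose proof (rsum_shift N (1,0)%Z _ Hnn) as Sh1.
  pose proof (rsum_shift N (0,1)%Z _ Hnn) as Sh2.
  unfold sh in H1.
  assert (HW : rsum (box N) (fun v => if Cstarb sp sm tp tm v && inb (N/4) v then 1 else 0)
               <= rsum (box N) (fun u => indP (Wj N Cs j u))).
  { apply rsum_le. intros u Hu. apply in_box in Hu.
    destruct (Cstarb sp sm tp tm u && inb (N/4) u) eqn:E.
    - apply andb_true_iff in E as [E1 E2]. rewrite indP_1; [lra|].
      split; [split; auto|left; exact E2].
    - unfold indP; destruct excluded_middle_informative; lra. }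
  assert (Delta * rsum (box N) (fun v => if Cstarb sp sm tp tm v && inb (N/4) v then 1 else 0)
          <= Delta * rsum (box N) (fun u => indP (Wj N Cs j u))).
  { apply Rmult_le_compat_l; lra. }
  cbv beta in Sh1, Sh2. fold Cs. lra.
Qed.


Fixpoint Lsum N Cs (m : nat) u : R :=
  match m with
  | O => indP (Lj N Cs 0 u)
  | S m' => Lsum N Cs m' u + indP (Lj N Cs (S m') u)
  end.

Lemma Lsum_cases N Cs m u :
  (Lsum N Cs m u = 0 /\ forall j, (j <= m)%nat -> ~ Lj N Cs j u) \/
  (Lsum N Cs m u = 1 /\ exists j, (j <= m)%nat /\ Lj N Cs j u).
Proof.
  induction m as [|m IH]; simpl.
  - destruct (excluded_middle_informative (Lj N Cs 0 u)) as [H|H].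
    + right. rewrite indP_1 by auto. split; auto. exists 0%nat; auto.
    + left. rewrite indP_0 by auto. split; auto. intros j Hj. replace j with 0%nat by lia. auto.
  - destruct (excluded_middle_informative (Lj N Cs (S m) u)) as [H|H].
    + rewrite indP_1 by auto. destruct IH as [[-> H0]|[-> [j [Hj HL]]]].
      * right. split; [lra|]. exists (S m); auto.
      * exfalso. pose proof (L_disj _ _ _ _ _ HL H). lia.
    + rewrite indP_0 by auto. destruct IH as [[-> H0]|[-> [j [Hj HL]]]].
      * left. split; [lra|]. intros j Hj. destruct (Nat.eq_dec j (S m)) as [->|]; auto. apply H0; lia.
      * right. split; [lra|]. exists j; split; auto.
Qed.

Lemma Lsum_bound N K sp sm tp tm m u :
  (N/4 + 1 <= N/2)%Z ->
  dist_ge (Cstar N sp sm tp tm) (bdry (Lam (N/4))) (bdry (Lam (N/2))) K -> INR m < K ->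
  Lsum N (Cstar N sp sm tp tm) m u <=
  (if Cstarb sp sm tp tm u && inb (N/2) u && negb (inb (N/4) u) then 1 else 0).
Proof.
  intros HN Hd Hm. destruct (Lsum_cases N (Cstar N sp sm tp tm) m u) as [[-> _]|[-> [j [Hj HL]]]].
  - destruct (_ && _ && _); lra.
  - assert (INR j < K) by (apply le_INR in Hj; lra).
    destruct (L_inside _ _ _ _ _ HN Hd H HL) as [H1 [H2 [_ H3]]].
    rewrite H3. unfold Lam in H1, H2. rewrite H1. destruct (inb (N/4) u); [tauto|]. simpl; lra.
Qed.

Lemma sum_layers N K Delta h sp sm tp tm m :
  (N/4 + 1 <= N/2)%Z -> (N/2 + 1 <= N)%Z -> (0 <= N/4)%Z ->
  unique_ground_state N 1 h sp -> unique_ground_state N (-1) h sm ->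
  unique_ground_state N 1 (fun v => h v + Delta) tp ->
  unique_ground_state N (-1) (fun v => h v + Delta) tm -> 0 < Delta ->
  dist_ge (Cstar N sp sm tp tm) (bdry (Lam (N/4))) (bdry (Lam (N/2))) K -> INR m < K ->
  (INR m + 1) * (Delta * rsum (box N) (fun v => if Cstarb sp sm tp tm v && inb (N/4) v then 1 else 0))
  <= 8 * rsum (box N) (Lsum N (Cstar N sp sm tp tm) m).
Proof.
  intros HN1 HN2 HN0 G1 G2 G3 G4 HD Hd.
  induction m as [|m IH]; intros Hm.
  - simpl. pose proof (layer_bound N K Delta h sp sm tp tm 0 HN1 HN2 HN0 G1 G2 G3 G4 HD Hd Hm). lra.
  - assert (Hm' : INR m < K) by (rewrite S_INR in Hm; lra).
    specialize (IH Hm').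
    pose proof (layer_bound N K Delta h sp sm tp tm (S m) HN1 HN2 HN0 G1 G2 G3 G4 HD Hd Hm).
    change (Lsum N (Cstar N sp sm tp tm) (S m)) with
      (fun u => Lsum N (Cstar N sp sm tp tm) m u + indP (Lj N (Cstar N sp sm tp tm) (S m) u)).
    rewrite rsum_plus, S_INR. lra.
Qed.

Lemma exists_m K : 0 < K -> exists m : nat, INR m < K /\ K <= INR m + 1.
Proof.
  intros HK. destruct (archimed K) as [H1 H2]. set (z := up K) in *.
  assert (Hz : (0 < z)%Z) by (apply lt_0_IZR; lra).
  destruct (Rlt_dec (IZR z - 1) K) as [H|H].
  - exists (Z.to_nat (z - 1)). rewrite INR_IZR_INZ, Z2Nat.id by lia.
    rewrite minus_IZR. lra.
  - assert (HK' : K = IZR z - 1) by lra.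
    assert (Hz2 : (2 <= z)%Z).
    { assert (1 < IZR z) by lra. apply lt_IZR in H0. lia. }
    exists (Z.to_nat (z - 2)). rewrite INR_IZR_INZ, Z2Nat.id by lia.
    rewrite minus_IZR. lra.
Qed.

Lemma N_facts n : (10 <= n)%nat -> let N := (2 ^ Z.of_nat n)%Z in
  (N/4 + 1 <= N/2)%Z /\ (N/2 + 1 <= N)%Z /\ (0 <= N/4)%Z.
Proof.
  intros Hn N. assert (H : (2 ^ 10 <= N)%Z).
  { unfold N. apply Z.pow_le_mono_r; lia. }
  change (2 ^ 10)%Z with 1024%Z in H.
  pose proof (Z.div_mod N 4 ltac:(lia)). pose proof (Z.mod_pos_bound N 4 ltac:(lia)).
  pose proof (Z.div_mod N 2 ltac:(lia)). pose proof (Z.mod_pos_bound N 2 ltac:(lia)).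
  lia.
Qed.


Theorem lemma2p4 (n : nat) (K Delta : R) (h : vtx -> R)
  (sp sm tp tm : vtx -> Z) :
  (10 <= n)%nat -> 0 < K -> 0 < Delta ->
  let N := (2 ^ Z.of_nat n)%Z in
  let ht := fun v => h v + Delta in
  unique_ground_state N 1 h sp ->
  unique_ground_state N (-1) h sm ->
  unique_ground_state N 1 ht tp ->
  unique_ground_state N (-1) ht tm ->
  ~ ( dist_ge (Cstar N sp sm tp tm) (bdry (Lam (N / 4))) (bdry (Lam (N / 2))) K
      /\ INR (card_in N (fun v => Cstarb sp sm tp tm v && inb (N / 4) v)) * Delta
         > 8 / K * INR (card_in N (fun v => Cstarb sp sm tp tm v
                                    && inb (N / 2) v && negb (inb (N / 4) v))) ).
Proof.
  intros Hn HK HD N ht G1 G2 G3 G4 [Hd Hc].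
  pose proof (N_facts n Hn) as HNf. cbv zeta in HNf. fold N in HNf.
  destruct HNf as [HN1 [HN2 HN0]].
  destruct (exists_m K HK) as [m [Hm1 Hm2]].
  pose proof (sum_layers N K Delta h sp sm tp tm m HN1 HN2 HN0 G1 G2 G3 G4 HD Hd Hm1) as S.
  assert (S2 : rsum (box N) (Lsum N (Cstar N sp sm tp tm) m) <=
     rsum (box N) (fun u => if Cstarb sp sm tp tm u && inb (N/2) u && negb (inb (N/4) u) then 1 else 0)).
  { apply rsum_le. intros u _. eapply Lsum_bound; eauto. }
  unfold card_in in Hc. rewrite !card_rsum in Hc.
  set (c1 := rsum (box N) (fun v => if Cstarb sp sm tp tm v && inb (N/4) v then 1 else 0)) in *.
  set (c2 := rsum (box N) (fun u => if Cstarb sp sm tp tm u && inb (N/2) u && negb (inb (N/4) u) then 1 else 0)) in *.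
  assert (Hc1 : 0 <= c1) by (apply rsum_nonneg; intros; destruct (_ && _); lra).
  assert (HX : 0 <= Delta * c1) by (apply Rmult_le_pos; lra).
  assert (E1 : Delta * c1 * K <= Delta * c1 * (INR m + 1)) by (apply Rmult_le_compat_l; lra).
  assert (E2 : 8 / K * c2 * K = 8 * c2) by (field; lra).
  assert (E3 : c1 * Delta * K > 8 / K * c2 * K) by (apply Rmult_gt_compat_r; lra).
  nra.
Qed.
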